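(* Let $(X,\to)$ be a transition system over $A$ (of arbitrary branching type). Then $\mathit{lo}_t$ is $c_t$-compatible, i.e. $\mathit{lo}_t(c_t(\mathcal S))\subseteq c_t(\mathit{lo}_t(\mathcal S))$ for every $\mathcal S\subseteq\mathcal P(X)$.
   Context: $\Diamond_a(S)=\{x\mid\exists x'\in S\colon x\xrightarrow{a}x'\}$; $\mathit{lo}_t(\mathcal S)=\bigcup_{a\in A}\{\Diamond_a(S)\mid S\in\mathcal S\}\cup\{X\}$. $\alpha_t(\mathcal S)=\{(X_1,X_2)\in\mathcal P(X)^2\mid\forall S\in\mathcal S\colon(X_1\cap S\neq\emptyset\iff X_2\cap S\neq\emptyset)\}$, $\gamma_t(R)=\{S\subseteq X\mid\forall(X_1,X_2)\in R\colon(X_1\cap S\neq\emptyset\iff X_2\cap S\neq\emptyset)\}$ for equivalences $R$ on $\mathcal P(X)$, and $c_t=\gamma_t\circ\alpha_t$. *)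

(* Defs.v *)
(* Sets over X are predicates X -> Prop; families of sets
   (subsets of P(X)) are predicates (X -> Prop) -> Prop. Equality of sets is
   extensional (seteq). *)
Set Implicit Arguments.

Definition seteq {X : Type} (S T : X -> Prop) : Prop := forall x, S x <-> T x.

Definition meets {X : Type} (S T : X -> Prop) : Prop := exists x, S x /\ T x.

Definition diamond {X A : Type} (step : X -> A -> X -> Prop) (a : A)
  (S : X -> Prop) : X -> Prop :=
  fun x => exists x', S x' /\ step x a x'.

Definition lo_t {X A : Type} (step : X -> A -> X -> Prop)
  (SS : (X -> Prop) -> Prop) : (X -> Prop) -> Prop :=
  fun T => (exists (a : A) (S : X -> Prop), SS S /\ seteq T (diamond step a S))
           \/ seteq T (fun _ => True).

Definition alpha_t {X : Type} (SS : (X -> Prop) -> Prop)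
  : (X -> Prop) -> (X -> Prop) -> Prop :=
  fun X1 X2 => forall S, SS S -> (meets X1 S <-> meets X2 S).

Definition gamma_t {X : Type} (R : (X -> Prop) -> (X -> Prop) -> Prop)
  : (X -> Prop) -> Prop :=
  fun S => forall X1 X2, R X1 X2 -> (meets X1 S <-> meets X2 S).

Definition c_t {X : Type} (SS : (X -> Prop) -> Prop) : (X -> Prop) -> Prop :=
  gamma_t (alpha_t SS).

Definition fam_subset {X : Type} (SS TT : (X -> Prop) -> Prop) : Prop :=
  forall S, SS S -> TT S.

(* Main.v *)
Require Import Defs.

Theorem mainTheorem11 (X A : Type) (step : X -> A -> X -> Prop)
  (SS : (X -> Prop) -> Prop) :
  fam_subset (lo_t step (c_t SS)) (c_t (lo_t step SS)).
Proof.
  intros T [[a [S [HS HT]]] | HT] X1 X2 H12.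
  - set (post := fun (Y : X -> Prop) x' => exists x, Y x /\ step x a x').
    assert (Hm : forall Y, meets Y T <-> meets (post Y) S).
    { intros Y; split.
      - intros [x [Yx Tx]]. apply HT in Tx. destruct Tx as [x' [Sx' st]].
        exists x'; split; [exists x; auto | auto].
      - intros [x' [[x [Yx st]] Sx']]. exists x; split; auto.
        apply HT. exists x'; auto. }
    eapply iff_trans; [apply Hm|]. eapply iff_trans; [|apply iff_sym, Hm].
    apply HS. intros S' HS'.
    assert (Hm' : forall Y, meets (post Y) S' <-> meets Y (diamond step a S')).
    { intros Y; split.
      - intros [x' [[x [Yx st]] Sx']]. exists x; split; auto. exists x'; auto.
      - intros [x [Yx [x' [Sx' st]]]]. exists x'; split; auto. exists x; auto. }
    eapply iff_trans; [apply Hm'|]. eapply iff_trans; [|apply iff_sym, Hm'].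
    apply H12. left. exists a, S'. split; [exact HS'|]. intro; tauto.
  - assert (Hm : forall Y, meets Y T <-> meets Y (fun _ => True)).
    { intros Y; split; intros [x [Yx Tx]]; exists x; split; auto; apply HT; auto. }
    eapply iff_trans; [apply Hm|]. eapply iff_trans; [|apply iff_sym, Hm].
    apply H12. right. intro; tauto.
Qed.
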